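(* Let $\varphi(s,v)=\vec c(s)+v\vec q(s)$ be a timelike ruled surface in $\mathbb{R}^3_1$ of type $M^1_-$ or $M^1_+$, and let $\varphi^*(s,v)=\vec c(s)+R(s)\vec a(s)+v\vec q^*(s)$ be a Mannheim offset of $\varphi$. Then $\varphi$ is developable if and only if $R$ is constant.
   Context: Work in Minkowski 3-space $\mathbb{R}^3_1$, i.e. $\mathbb{R}^3$ with $\langle x,y\rangle=-x_1y_1+x_2y_2+x_3y_3$, norm $\|x\|=\sqrt{|\langle x,x\rangle|}$, and Lorentzian cross product $x\times y=(x_2y_3-x_3y_2,\,x_1y_3-x_3y_1,\,x_2y_1-x_1y_2)$. A ruled surface is $\varphi(s,v)=\vec c(s)+v\vec q(s)$, where $\vec q$ is a unit non-null vector field with $\langle\vec q,\vec q\rangle=\varepsilon_2\in\{\pm1\}$, $d\vec q/ds$ is non-null, and the base curve $\vec c$ is the striction curve, i.e. $\langle d\vec q/ds,d\vec c/ds\rangle=0$; $s$ is the arc-length parameter of $\vec c$. Its Frenet frame is $\{\vec q,\vec h,\vec a\}$ with central normal $\vec h=\frac{d\vec q/ds}{\|d\vec q/ds\|}$ and asymptotic normal $\vec a=\frac{(d\vec q/ds)\times\vec q}{\|d\vec q/ds\|}$ (all assumed non-null). The surface is of type $M^1_-$ if $\vec q$ is timelike and $\vec h$ spacelike; of type $M^1_+$ if $\vec q$ and $\vec h$ are both spacelike (these two types are timelike surfaces); of type $M^2_+$ if $\vec h$ is timelike and $\vec q$, $d\vec q/ds$ are spacelike (a spacelike surface). The distribution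 parameter is $d_\varphi=\det(d\vec c/ds,\vec q,d\vec q/ds)/\langle d\vec q/ds,d\vec q/ds\rangle$, and $\varphi$ is called developable iff $d_\varphi\equiv 0$. A ruled surface $\varphi^*(s,v)=\vec c^*(s)+v\vec q^*(s)$, with striction curve $\vec c^*$ and Frenet frame $\{\vec q^*,\vec h^*,\vec a^*\}$ defined in the same way, is a Mannheim offset of the timelike ruled surface $\varphi$ if there is a one-to-one correspondence between their rulings such that $\vec h^*=\vec a$ (the asymptotic normal of $\varphi$ is the central normal of $\varphi^*$); in this case $\vec c^*(s)=\vec c(s)+R(s)\vec a(s)$ for a scalar function $R$. *)

(* Defs.v *)
From Stdlib Require Import Reals.
From Coquelicot Require Import Coquelicot.
Open Scope R_scope.

Definition vec3 := (R * R * R)%type.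
Definition v1 (x : vec3) : R := fst (fst x).
Definition v2 (x : vec3) : R := snd (fst x).
Definition v3 (x : vec3) : R := snd x.
Definition mk3 (a b c : R) : vec3 := (a, b, c).

Definition vadd (x y : vec3) : vec3 := mk3 (v1 x + v1 y) (v2 x + v2 y) (v3 x + v3 y).
Definition vscale (k : R) (x : vec3) : vec3 := mk3 (k * v1 x) (k * v2 x) (k * v3 x).

Definition lip (x y : vec3) : R := - v1 x * v1 y + v2 x * v2 y + v3 x * v3 y.
Definition lnorm (x : vec3) : R := sqrt (Rabs (lip x x)).
Definition lcross (x y : vec3) : vec3 :=
  mk3 (v2 x * v3 y - v3 x * v2 y) (v1 x * v3 y - v3 x * v1 y) (v2 x * v1 y - v1 x * v2 y).
Definition det3 (x y z : vec3) : R :=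
  v1 x * (v2 y * v3 z - v3 y * v2 z)
  - v2 x * (v1 y * v3 z - v3 y * v1 z)
  + v3 x * (v1 y * v2 z - v2 y * v1 z).

Definition timelike (x : vec3) : Prop := lip x x < 0.
Definition spacelike (x : vec3) : Prop := 0 < lip x x.
Definition nonnull (x : vec3) : Prop := lip x x <> 0.

Definition dcurve (f : R -> vec3) (s : R) : vec3 :=
  mk3 (Derive (fun t => v1 (f t)) s) (Derive (fun t => v2 (f t)) s)
      (Derive (fun t => v3 (f t)) s).

Definition smooth_fun_on (I : R -> Prop) (g : R -> R) : Prop :=
  forall s, I s -> forall n, ex_derive_n g n s.
Definition smooth_curve_on (I : R -> Prop) (f : R -> vec3) : Prop :=
  smooth_fun_on I (fun t => v1 (f t)) /\ smooth_fun_on I (fun t => v2 (f t))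
  /\ smooth_fun_on I (fun t => v3 (f t)).

(** Frenet frame {q, h, a} of the ruled surface c(s) + v q(s). *)
Definition central_normal (q : R -> vec3) (s : R) : vec3 :=
  vscale (/ lnorm (dcurve q s)) (dcurve q s).
Definition asymptotic_normal (q : R -> vec3) (s : R) : vec3 :=
  vscale (/ lnorm (dcurve q s)) (lcross (dcurve q s) (q s)).

Definition ruled_surface_on (I : R -> Prop) (c q : R -> vec3) : Prop :=
  smooth_curve_on I c /\ smooth_curve_on I q /\
  forall s, I s ->
    (lip (q s) (q s) = 1 \/ lip (q s) (q s) = -1) /\
    nonnull (dcurve q s) /\
    lip (dcurve q s) (dcurve c s) = 0 /\
    nonnull (central_normal q s) /\
    nonnull (asymptotic_normal q s).

Definition arclength_on (I : R -> Prop) (c : R -> vec3) : Prop :=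
  forall s, I s -> lnorm (dcurve c s) = 1.

Definition type_M1_minus (I : R -> Prop) (q : R -> vec3) : Prop :=
  forall s, I s -> timelike (q s) /\ spacelike (central_normal q s).
Definition type_M1_plus (I : R -> Prop) (q : R -> vec3) : Prop :=
  forall s, I s -> spacelike (q s) /\ spacelike (central_normal q s).

Definition distribution_parameter (c q : R -> vec3) (s : R) : R :=
  det3 (dcurve c s) (q s) (dcurve q s) / lip (dcurve q s) (dcurve q s).
Definition developable_on (I : R -> Prop) (c q : R -> vec3) : Prop :=
  forall s, I s -> distribution_parameter c q s = 0.

(** phi*(s,v) = c(s) + R(s) a(s) + v qs(s) is a Mannheim offset of phi:
    it is a ruled surface with striction curve c* = c + R a, and h* = a. *)
Definition mannheim_offset_on (I : R -> Prop) (c q : R -> vec3) (Rf : R -> R)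
    (qs : R -> vec3) : Prop :=
  ruled_surface_on I (fun s => vadd (c s) (vscale (Rf s) (asymptotic_normal q s))) qs /\
  forall s, I s -> central_normal qs s = asymptotic_normal q s.

(* Main.v *)
Require Import Defs.
From Stdlib Require Import Reals Lra.
From Coquelicot Require Import Coquelicot.
Open Scope R_scope.

Lemma loc_I (s0 s1 s : R) : s0 < s < s1 -> locally s (fun t => s0 < t < s1).
Proof.
  intros Hs. apply (locally_open (fun t => s0 < t /\ t < s1)).
  - apply open_and; [apply open_gt | apply open_lt].
  - intros x Hx; exact Hx.
  - exact Hs.
Qed.

Lemma sq_deriv (g : R -> R) x l :
  locally x (fun t => g t * g t = 1) -> is_derive g x l -> l = 0.
Proof.
  intros Hl Hd.
  assert (H1 : is_derive (fun t => g t * g t) x (l * g x + g x * l)).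
  { apply (is_derive_mult g g x l l Hd Hd). intros; apply Rmult_comm. }
  assert (H2 : is_derive (fun t => g t * g t) x 0).
  { apply is_derive_ext_loc with (fun _ => 1).
    - apply filter_imp with (2 := Hl). intros t Ht; now rewrite Ht.
    - apply (is_derive_const (V := R_NormedModule)). }
  apply is_derive_unique in H1. apply is_derive_unique in H2.
  rewrite H1 in H2. pose proof (locally_singleton _ _ Hl) as Hg. simpl in Hg.
  nra.
Qed.

Definition cex (f : R -> vec3) x := ex_derive (fun t => v1 (f t)) x /\
  ex_derive (fun t => v2 (f t)) x /\ ex_derive (fun t => v3 (f t)) x.

Lemma scal_lip_d (f1 f2 f3 g1 g2 g3 : R -> R) x :
 ex_derive f1 x -> ex_derive f2 x -> ex_derive f3 x ->
 ex_derive g1 x -> ex_derive g2 x -> ex_derive g3 x ->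
 is_derive (fun t => - f1 t * g1 t + f2 t * g2 t + f3 t * g3 t) x
 (- Derive f1 x * g1 x + - f1 x * Derive g1 x + (Derive f2 x * g2 x + f2 x * Derive g2 x) + (Derive f3 x * g3 x + f3 x * Derive g3 x)).
Proof. intros. auto_derive. repeat split; auto. rewrite !Rmult_1_l. reflexivity.
Qed.

Lemma lip_d (u w : R -> vec3) x : cex u x -> cex w x ->
 is_derive (fun t => lip (u t) (w t)) x (lip (dcurve u x) (w x) + lip (u x) (dcurve w x)).
Proof.
  intros [H1 [H2 H3]] [G1 [G2 G3]].
  pose proof (scal_lip_d _ _ _ _ _ _ x H1 H2 H3 G1 G2 G3) as H.
  match type of H with is_derive _ _ ?l =>
    replace (lip (dcurve u x) (w x) + lip (u x) (dcurve w x)) with l end.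
  - exact H.
  - unfold lip, dcurve, mk3, v1, v2, v3. simpl. ring.
Qed.

Lemma scal_cross_e (f2 f3 g2 g3 : R -> R) x :
 ex_derive f2 x -> ex_derive f3 x -> ex_derive g2 x -> ex_derive g3 x ->
 ex_derive (fun t => f2 t * g3 t - f3 t * g2 t) x.
Proof. intros. auto_derive. repeat split; auto. Qed.

Lemma cex_cross u w x : cex u x -> cex w x -> cex (fun t => lcross (u t) (w t)) x.
Proof.
  intros [H1 [H2 H3]] [G1 [G2 G3]]. unfold cex. repeat split.
  - exact (scal_cross_e _ _ _ _ x H2 H3 G2 G3).
  - exact (scal_cross_e _ _ _ _ x H1 H3 G1 G3).
  - apply ex_derive_ext with (fun t => v2 (u t) * v1 (w t) - v1 (u t) * v2 (w t)).
    intros; reflexivity. exact (scal_cross_e _ _ _ _ x H2 H1 G2 G1).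
Qed.

Lemma cex_scale (k : R -> R) u x : ex_derive k x -> cex u x ->
  cex (fun t => vscale (k t) (u t)) x.
Proof.
  intros Hk [H1 [H2 H3]]. unfold cex. repeat split; apply ex_derive_mult; auto.
Qed.

Lemma cex_invnorm u x : cex u x -> lip (u x) (u x) <> 0 ->
  ex_derive (fun t => / lnorm (u t)) x.
Proof.
  intros Hu Hn. unfold lnorm. apply ex_derive_inv.
  - pose proof (lip_d u u x Hu Hu) as Hd.
    pose proof (is_derive_Rabs _ _ _ Hd Hn) as Ha.
    pose proof (is_derive_sqrt _ _ _ Ha) as Hs.
    eexists. apply Hs. simpl. apply Rabs_pos_lt. exact Hn.
  - apply Rgt_not_eq. apply sqrt_lt_R0. apply Rabs_pos_lt. exact Hn.
Qed.

Lemma smooth_cex I f s : smooth_curve_on I f -> I s -> cex f s /\ cex (dcurve f) s.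
Proof.
  intros [H1 [H2 H3]] Hs. split; split; [|split| |split];
  first [exact (H1 s Hs 1%nat) | exact (H2 s Hs 1%nat) | exact (H3 s Hs 1%nat)
        | exact (H1 s Hs 2%nat) | exact (H2 s Hs 2%nat) | exact (H3 s Hs 2%nat)].
Qed.

Lemma lip_cross_cross p x : lip (lcross p x) (lcross p x) = lip p x * lip p x - lip p p * lip x x.
Proof. unfold lip, lcross, mk3, v1, v2, v3. simpl. ring. Qed.
Lemma lip_cross_det p x y : lip (lcross p x) y = det3 y x p.
Proof. unfold lip, det3, lcross, mk3, v1, v2, v3. simpl. ring. Qed.
Lemma lip_scale_l k x y : lip (vscale k x) y = k * lip x y.
Proof. unfold lip, vscale, mk3, v1, v2, v3. simpl. ring. Qed.
Lemma lip_sym x y : lip x y = lip y x.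
Proof. unfold lip. ring. Qed.

Lemma lnorm_sq x : lnorm x * lnorm x = Rabs (lip x x).
Proof. unfold lnorm. apply sqrt_sqrt. apply Rabs_pos. Qed.

Lemma lnorm_pos x : lip x x <> 0 -> 0 < lnorm x.
Proof. intros. apply sqrt_lt_R0. apply Rabs_pos_lt. auto. Qed.

Lemma alg_aa p x : lip x p = 0 -> lip x x * lip x x = 1 -> lip p p <> 0 ->
  let a := vscale (/ lnorm p) (lcross p x) in lip a a * lip a a = 1.
Proof.
  intros H1 H2 H3 a. unfold a.
  rewrite lip_scale_l, lip_sym, lip_scale_l, lip_cross_cross.
  rewrite (lip_sym p x), H1.
  pose proof (lnorm_sq p) as HN. pose proof (lnorm_pos p H3) as HP.
  set (N := lnorm p) in *. set (L := lip p p) in *. set (Q := lip x x) in *.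
  assert (HL : Rabs L * Rabs L = L * L).
  { rewrite <- Rabs_mult. apply Rabs_pos_eq. nra. }
  assert (E : / N * (/ N * (0 * 0 - L * Q)) = - (L * Q) / (N * N)).
  { field. lra. }
  rewrite E, HN.
  apply Rmult_eq_reg_r with (Rabs L * Rabs L).
  2: { rewrite HL. apply Rmult_integral_contrapositive; auto. }
  assert (HA : Rabs L <> 0) by (apply Rabs_no_R0; auto).
  replace (- (L * Q) / Rabs L * (- (L * Q) / Rabs L) * (Rabs L * Rabs L))
    with (L * L * (Q * Q)) by (field; auto).
  rewrite H2, HL. ring.
Qed.

Lemma scal_dstar (f k g : R -> R) s : ex_derive f s -> ex_derive k s -> ex_derive g s ->
  Derive (fun t => f t + k t * g t) s = Derive f s + (Derive k s * g s + k s * Derive g s).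
Proof.
  intros Hf Hk Hg. rewrite Derive_plus; auto.
  - rewrite Derive_mult; auto.
  - apply ex_derive_mult; auto.
Qed.

Lemma dstar (c a : R -> vec3) Rf s w : cex c s -> cex a s -> ex_derive Rf s ->
  lip w (dcurve (fun t => vadd (c t) (vscale (Rf t) (a t))) s) =
  lip w (dcurve c s) + Derive Rf s * lip w (a s) + Rf s * lip w (dcurve a s).
Proof.
  intros [C1 [C2 C3]] [A1 [A2 A3]] HR.
  assert (E1 : v1 (dcurve (fun t => vadd (c t) (vscale (Rf t) (a t))) s) =
    v1 (dcurve c s) + (Derive Rf s * v1 (a s) + Rf s * v1 (dcurve a s)))
    by exact (scal_dstar _ _ _ s C1 HR A1).
  assert (E2 : v2 (dcurve (fun t => vadd (c t) (vscale (Rf t) (a t))) s) =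
    v2 (dcurve c s) + (Derive Rf s * v2 (a s) + Rf s * v2 (dcurve a s)))
    by exact (scal_dstar _ _ _ s C2 HR A2).
  assert (E3 : v3 (dcurve (fun t => vadd (c t) (vscale (Rf t) (a t))) s) =
    v3 (dcurve c s) + (Derive Rf s * v3 (a s) + Rf s * v3 (dcurve a s)))
    by exact (scal_dstar _ _ _ s C3 HR A3).
  unfold lip at 1. rewrite E1, E2, E3. unfold lip. ring.
Qed.

Lemma qq'_zero (s0 s1 : R) (q : R -> vec3) t :
  smooth_curve_on (fun s => s0 < s < s1) q ->
  (forall s, s0 < s < s1 -> lip (q s) (q s) = 1 \/ lip (q s) (q s) = -1) ->
  s0 < t < s1 -> lip (q t) (dcurve q t) = 0.
Proof.
  intros Hq Hu Ht.
  destruct (smooth_cex _ _ _ Hq Ht) as [cq _].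
  pose proof (sq_deriv (fun u => lip (q u) (q u)) t
     (lip (dcurve q t) (q t) + lip (q t) (dcurve q t))) as H.
  assert (Hl : locally t (fun u => lip (q u) (q u) * lip (q u) (q u) = 1)).
  { apply filter_imp with (2 := loc_I s0 s1 t Ht). intros u Hu'.
    destruct (Hu u Hu') as [E|E]; rewrite E; ring. }
  specialize (H Hl (lip_d q q t cq cq)).
  rewrite lip_sym in H. lra.
Qed.

Lemma pointwise (s0 s1 : R) (c q qs : R -> vec3) (Rf : R -> R) s :
  ruled_surface_on (fun s => s0 < s < s1) c q ->
  smooth_fun_on (fun s => s0 < s < s1) Rf ->
  mannheim_offset_on (fun s => s0 < s < s1) c q Rf qs ->
  s0 < s < s1 ->
  (distribution_parameter c q s = 0 <-> Derive Rf s = 0).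
Proof.
  intros [Hc [Hq Hp]] HR [[_ [_ Hps]] Hcn] Hs.
  destruct (smooth_cex _ _ _ Hq Hs) as [cq cdq].
  destruct (smooth_cex _ _ _ Hc Hs) as [cc _].
  destruct (Hp s Hs) as [Hunit [Hdq [Hstr [Hh Ha]]]].
  pose proof (HR s Hs 1%nat) as HRd. simpl in HRd.
  set (a := asymptotic_normal q).
  assert (ca : cex a s).
  { exact (cex_scale (fun t => / lnorm (dcurve q t)) (fun t => lcross (dcurve q t) (q t)) s
      (cex_invnorm _ _ cdq Hdq) (cex_cross _ _ s cdq cq)). }
  assert (Haa' : lip (a s) (dcurve a s) = 0).
  { pose proof (sq_deriv (fun u => lip (a u) (a u)) s
      (lip (dcurve a s) (a s) + lip (a s) (dcurve a s))) as H.
    assert (Hl : locally s (fun u => lip (a u) (a u) * lip (a u) (a u) = 1)).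
    { apply filter_imp with (2 := loc_I s0 s1 s Hs). intros u Hu.
      destruct (Hp u Hu) as [Hunit' [Hdq' _]].
      apply (alg_aa (dcurve q u) (q u)); auto.
      - apply (qq'_zero s0 s1 q u Hq); auto.
        intros v Hv; exact (proj1 (Hp v Hv)).
      - destruct Hunit' as [E|E]; rewrite E; ring. }
    specialize (H Hl (lip_d a a s ca ca)). rewrite lip_sym in H. lra. }
  destruct (Hps s Hs) as [_ [_ [Hstr' _]]].
  assert (Hac : lip (a s) (dcurve (fun t => vadd (c t) (vscale (Rf t) (a t))) s) = 0).
  { unfold a. rewrite <- (Hcn s Hs). unfold central_normal. rewrite lip_scale_l.
    rewrite Hstr'. ring. }
  rewrite (dstar c a Rf s (a s) cc ca HRd), Haa' in Hac.
  assert (Hdet : lip (a s) (dcurve c s) = / lnorm (dcurve q s) * det3 (dcurve c s) (q s) (dcurve q s)).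
  { unfold a, asymptotic_normal. rewrite lip_scale_l, lip_cross_det. reflexivity. }
  pose proof (lnorm_pos _ Hdq) as HN.
  unfold distribution_parameter. unfold nonnull in Ha. fold a in Ha.
  split; intros H.
  - assert (Hd0 : det3 (dcurve c s) (q s) (dcurve q s) = 0).
    { unfold Rdiv in H. apply Rmult_integral in H. destruct H as [H|H]; auto.
      exfalso. apply (Rinv_neq_0_compat _ Hdq). auto. }
    rewrite Hd0, Rmult_0_r in Hdet. rewrite Hdet in Hac.
    assert (Derive Rf s * lip (a s) (a s) = 0) by lra.
    apply Rmult_integral in H0. destruct H0; auto. contradiction.
  - rewrite H in Hac. rewrite Hdet in Hac.
    assert (det3 (dcurve c s) (q s) (dcurve q s) = 0).
    { assert (/ lnorm (dcurve q s) * det3 (dcurve c s) (q s) (dcurve q s) = 0) by lra.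
      apply Rmult_integral in H0. destruct H0; auto.
      exfalso. apply Rinv_neq_0_compat in H0; auto. lra. }
    rewrite H0. unfold Rdiv. ring.
Qed.

Theorem theorem4p1 (s0 s1 : R) (c q qs : R -> vec3) (Rf : R -> R) :
  s0 < s1 ->
  ruled_surface_on (fun s => s0 < s < s1) c q ->
  arclength_on (fun s => s0 < s < s1) c ->
  (type_M1_minus (fun s => s0 < s < s1) q \/ type_M1_plus (fun s => s0 < s < s1) q) ->
  smooth_fun_on (fun s => s0 < s < s1) Rf ->
  mannheim_offset_on (fun s => s0 < s < s1) c q Rf qs ->
  (developable_on (fun s => s0 < s < s1) c q <->
   exists k : R, forall s, s0 < s < s1 -> Rf s = k).
Proof.
  intros H01 Hr _ _ HR Hm.
  assert (P := fun s Hs => pointwise s0 s1 c q qs Rf s Hr HR Hm Hs).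
  assert (Dz : forall t, s0 < t < s1 -> Derive Rf t = 0 -> is_derive Rf t 0).
  { intros t Ht Hz. rewrite <- Hz. apply Derive_correct. exact (HR t Ht 1%nat). }
  unfold developable_on. split.
  - intros Hd. exists (Rf ((s0 + s1) / 2)). intros s Hs.
    destruct (Rtotal_order s ((s0 + s1) / 2)) as [Hlt|[Heq|Hgt]].
    + apply (eq_is_derive Rf s ((s0 + s1) / 2)); auto.
      intros t Ht. apply Dz; [lra|]. apply P; [lra|]. apply Hd; lra.
    + now rewrite Heq.
    + symmetry. apply (eq_is_derive Rf ((s0 + s1) / 2) s); auto.
      intros t Ht. apply Dz; [lra|]. apply P; [lra|]. apply Hd; lra.
  - intros [k Hk] s Hs. apply P; auto.
    rewrite (Derive_ext_loc Rf (fun _ => k)). apply Derive_const.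
    apply filter_imp with (2 := loc_I s0 s1 s Hs). intros; auto.
Qed.
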